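(* Let $n=2k+1$ for an integer $k\ge 2$, and let $\sigma_n$ be the multiset consisting of $k$ copies of $1$ and $k+1$ copies of $-k/(k+1)$. Then $\sum_{\lambda\in\sigma_n}\lambda=0$ (counted with multiplicity), and $\sigma_n$ is not realizable.
   Context: A multiset $\sigma=\{\lambda_1,\dots,\lambda_n\}$ of complex numbers is realizable if there exists an $n\times n$ matrix with all entries real and nonnegative whose eigenvalues, counted with algebraic multiplicity, are exactly $\lambda_1,\dots,\lambda_n$. *)

(* Defs.v *)
From HB Require Import structures.
From mathcomp Require Import all_boot all_order all_algebra.
From mathcomp Require Import complex.
From mathcomp Require Import reals.
Set Implicit Arguments. Unset Strict Implicit. Unset Printing Implicit Defensive.
Import Order.TTheory GRing.Theory Num.Theory.
Local Open Scope ring_scope.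
Local Open Scope complex_scope.

(* A multiset of complex numbers (a list, order irrelevant) of size n is
   realizable if there is an n x n matrix with real nonnegative entries whose
   eigenvalues, counted with algebraic multiplicity, are exactly the elements
   of the list, i.e. whose characteristic polynomial (over C) is
   \prod_(l <- s) (X - l). *)
Definition realizable (R : realType) (s : seq R[i]) : Prop :=
  exists A : 'M[R]_(size s),
    (forall i j, 0 <= A i j) /\
    char_poly (map_mx (fun x : R => x%:C) A) = \prod_(l <- s) ('X - l%:P).

Definition sigma (R : realType) (k : nat) : seq R[i] :=
  nseq k 1 ++ nseq k.+1 ((- (k%:R / k.+1%:R))%:C).

(* Main.v *)
Require Import Defs.
From mathcomp Require Import all_boot all_order all_algebra.
From mathcomp Require Import complex.
From mathcomp Require Import reals.
From mathcomp Require Import ring lra zify.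
Import Order.TTheory GRing.Theory Num.Theory.
Set Implicit Arguments. Unset Strict Implicit. Unset Printing Implicit Defensive.
Local Open Scope ring_scope.

Section PF.
Variable R : realType.

Definition nng m n (M : 'M[R]_(m,n)) := forall i j, 0 <= M i j.

Lemma nng_mul m n p (M : 'M[R]_(m,n)) (N : 'M[R]_(n,p)) :
  nng M -> nng N -> nng (M *m N).
Proof. by move=> hM hN i j; rewrite mxE sumr_ge0 // => l _; rewrite mulr_ge0. Qed.

Lemma mul_ge m n p (M : 'M[R]_(m,n)) (N : 'M[R]_(n,p)) i l j :
  nng M -> nng N -> M i l * N l j <= (M *m N) i j.
Proof.
move=> hM hN; rewrite mxE (bigD1 l) //= lerDl sumr_ge0 // => l' _.
by rewrite mulr_ge0.
Qed.

Lemma nng1 n : nng (1%:M : 'M[R]_n).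
Proof. by move=> i j; rewrite mxE ler0n. Qed.

Lemma nng_exp n (F : 'M[R]_n) j : nng F -> nng (F ^+ j).
Proof.
move=> hF; elim: j => [|j IH]; first by rewrite expr0; apply: nng1.
by rewrite exprS -mulmxE; apply: nng_mul.
Qed.

Lemma exp_diag n (F : 'M[R]_n) d j i : nng F -> d <= F i i -> 0 <= d ->
  d ^+ j <= (F ^+ j) i i.
Proof.
move=> hF hd d0; elim: j => [|j IH]; first by rewrite expr0 !mxE eqxx.
rewrite [F ^+ _]exprSr -mulmxE; apply: le_trans (mul_ge i i i (nng_exp _ hF) hF).
by rewrite exprSr ler_pM // exprn_ge0.
Qed.


Lemma horner_mx_sum n (K : 'M[R]_n.+1) (p : {poly R}) :
  horner_mx K p = \sum_(j < size p) p`_j *: K ^+ j.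
Proof.
rewrite -{1}[p]coefK poly_def rmorph_sum; apply: eq_bigr => j _.
by rewrite -mul_polyC rmorphM /= horner_mx_C rmorphXn /= horner_mx_X -mulmxE mul_scalar_mx.
Qed.

Lemma growth n (K : 'M[R]_n.+1) (x : 'cV[R]_n.+1) (p : {poly R}) mu :
  p \is monic -> horner_mx K p = 0 -> nng K -> nng x -> 0 < \sum_i x i 0 ->
  (forall i, mu * x i 0 <= (K *m x) i 0) ->
  \sum_(j < (size p).-1) `|p`_j| + 1 < mu -> False.
Proof.
move=> mp hp hK hx hs hmu hC.
pose sg j := \sum_i ((K ^+ j) *m x) i 0.
have C0 : 0 <= \sum_(j < (size p).-1) `|p`_j| by rewrite sumr_ge0.
have mu1 : 1 < mu by apply: le_lt_trans hC; rewrite lerDr.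
have vstep j i : mu * (K ^+ j *m x) i 0 <= (K ^+ j *m (K *m x)) i 0.
  have := nng_mul (nng_exp j hK) (_ : nng (K *m x - mu *: x)) i 0.
  rewrite mulmxBr -scalemxAr !mxE subr_ge0; apply.
  by move=> a b; move: (hmu a); rewrite (ord1 b) -subr_ge0 !mxE.
have step j : mu * sg j <= sg j.+1.
  rewrite /sg mulr_sumr; apply: ler_sum => i _.
  by rewrite exprSr -mulmxE -mulmxA vstep.
have sg0 : 0 < sg 0 by rewrite /sg expr0 (eq_bigr (fun i => x i 0)) // => i _; rewrite mul1mx.
have sgge j : 0 <= sg j.
  by rewrite sumr_ge0 // => i _; exact: (nng_mul (nng_exp j hK) hx i 0).
have sgS j : sg j <= sg j.+1.
  apply: le_trans (step j); rewrite ler_peMl //; exact: ltW.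
have mono a b : (a <= b)%N -> sg a <= sg b.
  move=> /subnK <-; elim: (b - a)%N => [|c IH] //=.
  by rewrite addSn; apply: le_trans (sgS _).
have sgpos j : 0 < sg j by apply: lt_le_trans (mono 0%N j _).
have hsum : \sum_(j < size p) p`_j * sg j = 0.
  transitivity (\sum_i ((horner_mx K p) *m x) i 0); last first.
    by rewrite hp mul0mx; apply: big1 => i _; rewrite mxE.
  rewrite horner_mx_sum mulmx_suml /sg (eq_bigr (fun i => \sum_(j < size p) p`_j * (K ^+ j *m x) i 0)); last first.
    by move=> i _; rewrite summxE; apply: eq_bigr => j _; rewrite -scalemxAl mxE.
  by rewrite exchange_big /=; apply: eq_bigr => j _; rewrite mulr_sumr.
have sp : size p = (size p).-1.+1 by rewrite prednK // lt0n size_poly_eq0 monic_neq0.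
set d := (size p).-1 in sp hC C0 *.
have pd : p`_d = 1 by move/monicP: mp; rewrite lead_coefE.
move: hsum; rewrite sp big_ord_recr /= pd mul1r => hsum.
have e1 : sg d <= \sum_(j < d) `|p`_j| * sg j.
  have -> : sg d = - \sum_(j < d) p`_j * sg j.
    by apply/eqP; rewrite -addr_eq0 addrC hsum.
  rewrite -sumrN; apply: ler_sum => j _.
  by apply: le_trans (ler_norm _) _; rewrite normrN normrM (ger0_norm (sgge _)).
have e2 : mu * \sum_(j < d) `|p`_j| * sg j <= (\sum_(j < d) `|p`_j|) * sg d.
  rewrite mulr_sumr mulr_suml; apply: ler_sum => j _.
  rewrite mulrCA ler_wpM2l //; apply: le_trans (step j) (mono _ _ _).
  exact: ltn_ord.
have : mu * sg d <= (\sum_(j < d) `|p`_j|) * sg d.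
  apply: le_trans e2; rewrite ler_wpM2l //; lra.
rewrite ler_pM2r //; lra.
Qed.


Lemma pf_uniq n (M : 'M[R]_n.+1) (v w : 'cV[R]_n.+1) :
  (forall i j, 0 < M i j) -> (forall i, 0 < w i 0) -> M *m w = w -> M *m v = v ->
  exists t, v = t *: w.
Proof.
move=> hM hw Mw Mv.
pose f i := v i 0 / w i 0.
case: (@arg_minP _ _ _ (ord0 : 'I_n.+1) xpredT f isT) => i0 _ hmin.
set t := f i0.
pose x := v - t *: w.
have hx i : 0 <= x i 0.
  rewrite !mxE subr_ge0 -ler_pdivlMr //; exact: hmin.
have hx0 : x i0 0 = 0 by rewrite !mxE /t /f divfK ?subrr // gt_eqF.
have Mx : M *m x = x by rewrite mulmxBr -scalemxAr Mw Mv.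
have hs : \sum_l M i0 l * x l 0 = 0.
  by rewrite -[RHS]hx0 -[in RHS]Mx mxE.
have hz l : x l 0 = 0.
  have := psumr_eq0P (fun l _ => mulr_ge0 (ltW (hM i0 l)) (hx l)) hs (i := l) isT.
  by move/eqP; rewrite mulf_eq0 gt_eqF //= => /eqP.
exists t; apply/matrixP => i j; rewrite (ord1 j).
by apply/eqP; rewrite -subr_eq0; have := hz i; rewrite !mxE => ->.
Qed.


Lemma pos_pow n (F : 'M[R]_n.+1) d :
  nng F -> (forall i, F i i = d) -> 0 < d ->
  (forall T : {set 'I_n.+1}, T != set0 ->
     (forall i j, i \in T -> 0 < F i j -> j \in T) -> T = setT) ->
  forall i j, 0 < (F ^+ n.+1) i j.
Proof.
move=> hF hd d0 hirr i.
pose Rt t := [set j | 0 < (F ^+ t) i j].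
have diagpos t : 0 < (F ^+ t) i i.
  have hdi : d <= F i i by rewrite hd.
  exact: lt_le_trans (exprn_gt0 t d0) (exp_diag t hF hdi (ltW d0)).
have iR t : i \in Rt t by rewrite inE diagpos.
have stepR t a b : 0 < (F ^+ t) i a -> 0 < F a b -> 0 < (F ^+ t.+1) i b.
  move=> h1 h2; rewrite exprSr -mulmxE.
  by apply: lt_le_trans (mul_ge i a b (nng_exp t hF) hF); rewrite mulr_gt0.
have sub t : Rt t \subset Rt t.+1.
  apply/subsetP => j; rewrite !inE => h; apply: stepR h _; by rewrite hd.
have card t : (minn t.+1 n.+1 <= #|Rt t|)%N.
  elim: t => [|t IH].
    apply: leq_trans (geq_minl _ _) _; rewrite card_gt0; apply/set0Pn; exists i; exact: iR.
  case: (boolP (Rt t == setT)) => [/eqP E|NE].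
    have : setT \subset Rt t.+1 by rewrite -E sub.
    move/subset_leq_card; rewrite cardsT card_ord => h; exact: leq_trans (geq_minr _ _) h.
  case: (boolP [exists a, exists b, (a \in Rt t) && (0 < F a b) && (b \notin Rt t)]).
    move=> /existsP[a /existsP[b /andP[/andP[ha hab] hb]]].
    have hb' : b \in Rt t.+1 by move: ha; rewrite !inE => ha; exact: stepR ha hab.
    have pr : Rt t \proper Rt t.+1.
      by rewrite properE sub /=; apply/subsetPn; exists b.
    have := proper_card pr; lia.
  move=> hne; exfalso; move/eqP: NE; apply; apply: hirr.
    by apply/set0Pn; exists i; exact: iR.
  move=> a b ha hab; apply/negPn/negP => hb; move/existsPn: hne => /(_ a)/existsPn/(_ b).
  by rewrite ha hab hb.
have : Rt n.+1 == setT.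
  by rewrite eqEcard subsetT cardsT card_ord; have := card n.+1; lia.
move/eqP=> E j; have : j \in Rt n.+1 by rewrite E inE.
by rewrite inE.
Qed.


Lemma mulmx_le m n (M : 'M[R]_(m,n)) (a b : 'cV[R]_n) :
  nng M -> (forall i, a i 0 <= b i 0) -> forall i, (M *m a) i 0 <= (M *m b) i 0.
Proof.
move=> hM hab i.
have h : nng (b - a) by move=> l z; rewrite (ord1 z) !mxE subr_ge0.
by have := nng_mul hM h i 0; rewrite mulmxBr !mxE subr_ge0.
Qed.

Lemma bernoulli (e : R) L : 0 <= e -> 1 + L%:R * e <= (1 + e) ^+ L.
Proof.
move=> e0; elim: L => [|L IH]; first by rewrite mul0r addr0 expr0.
rewrite exprS; apply: le_trans (_ : (1 + e) * (1 + L%:R * e) <= _); last first.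
  by rewrite ler_wpM2l // addr_ge0.
have h : 0 <= L%:R * e * e by rewrite !mulr_ge0.
rewrite -natr1 mulrDl mul1r; nra.
Qed.

Lemma last_true (P : nat -> bool) k : P 0 -> ~~ P k ->
  exists j, [/\ (j < k)%N, P j & ~~ P j.+1].
Proof.
move=> h0; elim: k => [|k IH] hk; first by rewrite h0 in hk.
case: (boolP (P k)) => hPk; first by exists k.
have [j [hj1 hj2 hj3]] := IH hPk; exists j; split => //; exact: ltnW.
Qed.

Lemma pow_ge n (G : 'M[R]_n) (x : 'cV[R]_n) lam t :
  nng G -> 0 <= lam -> (forall i, lam * x i 0 <= (G *m x) i 0) ->
  forall i, lam ^+ t * x i 0 <= (G ^+ t *m x) i 0.
Proof.
move=> hG l0 hx; elim: t => [|t IH] i; first by rewrite !expr0 mul1r mul1mx.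
rewrite [G ^+ _]exprSr -mulmxE -mulmxA.
have hx' : forall j, (lam *: x) j 0 <= (G *m x) j 0 by move=> j; rewrite mxE hx.
apply: le_trans (mulmx_le (nng_exp t hG) hx' i).
have -> : (G ^+ t *m (lam *: x)) i 0 = lam * (G ^+ t *m x) i 0 by rewrite -scalemxAr mxE.
by rewrite exprSr -mulrA mulrCA ler_wpM2l.
Qed.

Lemma mixed_false n (F : 'M[R]_n.+1) (N : nat) (q : {poly R}) (y : 'cV[R]_n.+1) i1 i2 :
  nng F -> (forall i j, 0 < (F ^+ N) i j) ->
  (forall L, (0 < L)%N -> horner_mx (F ^+ L) q = 0) -> q \is monic -> (0 < N)%N ->
  F ^+ N *m y = y -> 0 < y i1 0 -> y i2 0 < 0 -> False.
Proof.
move=> hF hG hq mq N0 Gy y1 y2.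
set G := F ^+ N in hG Gy.
have nG : nng G by apply: nng_exp.
pose x := \col_i Num.max (y i 0) 0.
pose w := \col_i Num.max (- y i 0) 0.
have nx : nng x by move=> i j; rewrite !mxE le_max lexx orbT.
have nw : nng w by move=> i j; rewrite !mxE le_max lexx orbT.
have yxw : y = x - w.
  apply/matrixP => i j; rewrite (ord1 j) !mxE.
  case: (lerP 0 (y i 0)) => h.
    by rewrite max_r ?subr0 // oppr_le0.
  by rewrite max_l ?sub0r ?opprK // oppr_ge0 ltW.
have hzw i : (G *m x) i 0 - x i 0 = (G *m w) i 0 - w i 0.
  have e : G *m x - G *m w = x - w by rewrite -mulmxBr -yxw.
  move: e; set gx := G *m x; set gw := G *m w => e.
  have := congr1 (fun M : 'cV[R]_n.+1 => M i 0) e; rewrite /= !mxE; lra.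
have zpos i : 0 < (G *m x) i 0 - x i 0.
  case: (lerP 0 (y i 0)) => h.
    rewrite hzw (_ : w i 0 = 0) ?subr0; last by rewrite mxE max_r // oppr_le0.
    apply: lt_le_trans (mul_ge i i2 0 nG nw); rewrite mulr_gt0 // mxE.
    by rewrite max_l ?oppr_gt0 // ltW // oppr_gt0.
  rewrite (_ : x i 0 = 0) ?subr0; last by rewrite mxE max_r // ltW.
  apply: lt_le_trans (mul_ge i i1 0 nG nx); rewrite mulr_gt0 // mxE.
  by rewrite max_l // ltW.
pose z i := (G *m x) i 0 - x i 0.
case: (@arg_minP _ _ _ (ord0 : 'I_n.+1) xpredT z isT) => i0 _ hmin.
set m0 := z i0.
have m0p : 0 < m0 by apply: zpos.
pose X := \sum_i x i 0.
have xX i : x i 0 <= X.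
  by rewrite /X (bigD1 i) //= lerDl sumr_ge0 // => l _; apply: nx.
have Xp : 0 < X by apply: lt_le_trans (xX i1); rewrite mxE max_l // ltW.
pose e := m0 / X.
have e0 : 0 < e by rewrite divr_gt0.
have hlam i : (1 + e) * x i 0 <= (G *m x) i 0.
  have h1 : e * x i 0 <= m0.
    rewrite /e mulrAC ler_pdivrMr // ler_wpM2l //; exact: ltW.
  have h2 : m0 <= z i by apply: hmin.
  rewrite /z in h2; lra.
pose C := \sum_(j < (size q).-1) `|q`_j|.
have C0 : 0 <= C by rewrite sumr_ge0.
pose L := (Num.bound (C / e)).+1.
have hL : C + 1 < (1 + e) ^+ L.
  apply: lt_le_trans (bernoulli L (ltW e0)).
  have : C / e < (Num.bound (C / e))%:R by apply: archi_boundP; rewrite divr_ge0 // ltW.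
  rewrite ltr_pdivrMr // => h; rewrite /L -natr1 mulrDl mul1r; lra.
have l0 : 0 <= 1 + e by rewrite addr_ge0 // ltW.
have Kx := pow_ge L nG l0 hlam.
apply: (growth mq _ (nng_exp L nG) nx _ Kx hL).
  by rewrite /G -exprM; apply: hq; rewrite muln_gt0 N0.
apply: lt_le_trans (_ : x i1 0 <= _); last by rewrite /X (bigD1 i1) //= lerDl sumr_ge0 // => l _; apply: nx.
by rewrite mxE max_l // ltW.
Qed.

Lemma map_mx_exp n (N : 'M[R]_n) t :
  map_mx (real_complex R) (N ^+ t) = (map_mx (real_complex R) N) ^+ t.
Proof.
elim: t => [|t IH]; first by rewrite !expr0 map_mx1.
by rewrite !exprS -!mulmxE map_mxM IH.
Qed.

Lemma nil_tr0 n (N : 'M[R]_n.+1) j : N ^+ j = 0 -> \tr N = 0.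
Proof.
move=> hN.
pose Nc := map_mx (real_complex R) N.
have hNc : Nc ^+ j = 0 by rewrite /Nc -map_mx_exp hN map_mx0.
have [r hr] := closed_field_poly_normal (char_poly Nc).
move: hr; rewrite (monicP (char_poly_monic Nc)) scale1r => hr.
have r0 z : z \in r -> z = 0.
  move=> zr; have : root (char_poly Nc) z by rewrite hr root_prod_XsubC.
  rewrite -eigenvalue_root_char => /eigenvalueP [v hv vn0].
  have hvj t : v *m Nc ^+ t = z ^+ t *: v.
    elim: t => [|t IH]; first by rewrite !expr0 mulmx1 scale1r.
    by rewrite exprSr -mulmxE mulmxA IH -scalemxAl hv scalerA -exprSr.
  have := hvj j; rewrite hNc mulmx0 => /esym/eqP; rewrite scaler_eq0 (negPf vn0) orbF.
  by rewrite expf_eq0 => /andP[_ /eqP].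
have hc : char_poly Nc = 'X^(size r).
  rewrite hr (eq_big_seq (fun _ => 'X)); last by move=> z /r0 ->; rewrite subr0.
  rewrite big_const_seq count_predT.
  by elim: (size r) => [|m IH] /=; [rewrite expr0 | rewrite IH exprS].
have sr : size r = n.+1.
  by have := size_char_poly Nc; rewrite hc size_polyXn => -[].
have := char_poly_trace Nc (ltn0Sn n); rewrite hc sr coefXn /= eqn_leq ltnn /=.
rewrite trace_map_mx andbF => /esym/eqP; rewrite oppr_eq0 fmorph_eq0 => /eqP.
done.
Qed.

Lemma nz_entry m n (W : 'M[R]_(m,n)) : W != 0 -> exists a b, W a b != 0.
Proof.
case: (boolP [exists a, exists b, W a b != 0]) => [/existsP[a /existsP[b h]]|h] Wn.
  by exists a, b.
exfalso; move/negP: Wn; apply; apply/eqP/matrixP => a b; rewrite mxE; apply/eqP.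
by move/existsPn: h => /(_ a)/existsPn/(_ b); rewrite negbK.
Qed.

Lemma pf_trace n (F : 'M[R]_n.+1) d k :
  nng F -> (forall i, F i i = d) -> 0 < d ->
  (forall T : {set 'I_n.+1}, T != set0 ->
     (forall i j, i \in T -> 0 < F i j -> j \in T) -> T = setT) ->
  (0 < k)%N -> (F - 1) ^+ k * F ^+ k.+1 = 0 -> \tr F = 1.
Proof.
move=> hF hd d0 hirr k0 hid.
have hG := pos_pow hF hd d0 hirr.
have dpos t i : 0 < (F ^+ t) i i.
  have hdi : d <= F i i by rewrite hd.
  exact: lt_le_trans (exprn_gt0 t d0) (exp_diag t hF hdi (ltW d0)).
pose q : {poly R} := ('X - 1%:P) ^+ k * 'X ^+ k.+1.
have mq : q \is monic by rewrite monicMr ?monicXn // monic_exp // monicXsubC.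
have hq1 : horner_mx F q = 0.
  by rewrite rmorphM !rmorphXn rmorphB /= horner_mx_X horner_mx_C.
have hq L : (0 < L)%N -> horner_mx (F ^+ L) q = 0.
  move=> L0.
  have e : horner_mx (F ^+ L) q = horner_mx F ((('X^L - 1%:P) ^+ k) * ('X^L) ^+ k.+1).
    by rewrite !rmorphM !rmorphXn !rmorphB /= !horner_mx_C !horner_mx_X rmorphXn /= horner_mx_X.
  rewrite {}e.
  have -> : ('X^L - 1%:P) ^+ k * ('X^L) ^+ k.+1 =
      q * ((\sum_(i < L) 'X^i) ^+ k * 'X^(L.-1 * k.+1)).
    rewrite /q polyC1 subrX1 exprMn -exprM.
    rewrite (_ : (L * k.+1 = k.+1 + L.-1 * k.+1)%N); last by case: L L0 => //= L _; rewrite mulSn.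
    rewrite exprD; ring.
  by rewrite rmorphM /= hq1 mul0r.
pose Y j := F ^+ k.+1 * (F - 1) ^+ j.
have cFF a : GRing.comm (F ^+ a) F := commr_sym (commrX a (commr_refl F)).
have cF j : GRing.comm F (Y j).
  apply: commrM; first exact: commrX (commr_refl F).
  by apply: commrX; apply: commrB; [exact: commr_refl | exact: commr1].
have YS j : Y j.+1 = Y j * F - Y j by rewrite /Y [(F - 1) ^+ _]exprSr mulrA mulrBr mulr1.
have Yk : Y k = 0.
  have c : GRing.comm (F ^+ k.+1) ((F - 1) ^+ k).
    by apply: commrX; apply: commrB; [exact: cFF | exact: commr1].
  by rewrite /Y c hid.
have Y0 : Y 0 != 0.
  apply/eqP => h; have : (Y 0) ord0 ord0 = 0 by rewrite h mxE.
  by rewrite /Y expr0 mulr1 => e; have := dpos k.+1 ord0; rewrite e ltxx.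
have Ykn : ~~ (Y k != 0) by rewrite negbK Yk.
have [j0 [j0k Yj0 Yj1]] := @last_true (fun j => Y j != 0) k Y0 Ykn.
move/negPn/eqP: Yj1 => Yj1.
have WF : Y j0 * F = Y j0 by apply/eqP; rewrite -subr_eq0 -YS Yj1.
have FW : F * Y j0 = Y j0 by rewrite cF WF.
have [u [upos Fu]] : exists u : 'cV[R]_n.+1, (forall i, 0 < u i 0) /\ F *m u = u.
  have [a [b hab]] := nz_entry Yj0.
  pose y := \col_i (Y j0) i b.
  have Fy : F *m y = y.
    apply/matrixP => i z; rewrite (ord1 z) mxE [RHS]mxE.
    have := congr1 (fun M : 'M[R]_n.+1 => M i b) FW; rewrite -mulmxE mxE => <-.
    by apply: eq_bigr => l _; rewrite mxE.
  have Fty t : F ^+ t *m y = y.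
    elim: t => [|t IH]; first by rewrite expr0 mul1mx.
    by rewrite exprSr -mulmxE -mulmxA Fy IH.
  have GY := Fty n.+1.
  have ya : y a 0 != 0 by rewrite mxE.
  case: (boolP [forall i, 0 <= y i 0]) => [/forallP hy | hy].
    exists y; split => // i.
    have ya' : 0 < y a 0 by rewrite lt_neqAle eq_sym ya hy.
    have ny : nng y by move=> l z; rewrite (ord1 z); exact: hy.
    rewrite -GY; apply: lt_le_trans (mul_ge i a 0 (nng_exp _ hF) ny).
    by rewrite mulr_gt0 // hG.
  case: (boolP [forall i, y i 0 <= 0]) => [/forallP hy' | hy'].
    exists (- y); split; last by rewrite mulmxN Fy.
    move=> i.
    have ya' : 0 < (- y) a 0 by rewrite mxE oppr_gt0 lt_neqAle ya hy'.
    have ny : nng (- y) by move=> l z; rewrite (ord1 z) mxE oppr_ge0; exact: hy'.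
    have GY' : F ^+ n.+1 *m (- y) = - y by rewrite mulmxN GY.
    rewrite -GY'; apply: lt_le_trans (mul_ge i a 0 (nng_exp _ hF) ny).
    by rewrite mulr_gt0 // hG.
  exfalso.
  move/forallPn: hy => [i1]; rewrite -ltNge => h1.
  move/forallPn: hy' => [i2]; rewrite -ltNge => h2.
  exact: (mixed_false hF hG hq mq (ltn0Sn n) GY h2 h1).
have Fut t : F ^+ t *m u = u.
  elim: t => [|t IH]; first by rewrite expr0 mul1mx.
  by rewrite exprSr -mulmxE -mulmxA Fu IH.
have nu : nng u by move=> l z; rewrite (ord1 z); exact: ltW.
have j00 : j0 = 0%N.
  case E : j0 => [//|j'] ; exfalso.
  rewrite E in Yj0 WF.
  pose Z := Y j'.
  have ZF : Z * F = Z + Y j'.+1 by rewrite YS addrC subrK.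
  have ZFt t : Z *m F ^+ t = Z + t%:R *: Y j'.+1.
    elim: t => [|t IH]; first by rewrite expr0 mulmx1 scale0r addr0.
    rewrite exprSr -mulmxE mulmxA IH mulmxDl -scalemxAl !mulmxE ZF WF.
    by rewrite -natr1 scalerDl scale1r addrA addrAC.
  have [a [b hab]] := nz_entry Yj0.
  have Ftb t l : (F ^+ t) l b <= u l 0 / u b 0.
    rewrite ler_pdivlMr //; rewrite -{2}(Fut t).
    exact: (mul_ge l b 0 (nng_exp t hF) nu).
  pose Cst := \sum_l `|Z a l| * (u l 0 / u b 0).
  have bnd t : `|Z a b + t%:R * Y j'.+1 a b| <= Cst.
    have e : (Z *m F ^+ t) a b = Z a b + t%:R * Y j'.+1 a b by rewrite ZFt !mxE.
    rewrite -e mxE; apply: le_trans (ler_norm_sum _ _ _) _; apply: ler_sum => l _.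
    rewrite normrM (ger0_norm (nng_exp t hF l b)); apply: ler_wpM2l => //.
  have Wp : 0 < `|Y j'.+1 a b| by rewrite normr_gt0.
  pose t := Num.bound ((Cst + `|Z a b|) / `|Y j'.+1 a b|).
  have ht : (Cst + `|Z a b|) / `|Y j'.+1 a b| < t%:R.
    apply: archi_boundP; rewrite divr_ge0 // addr_ge0 //.
    by apply: le_trans (bnd 0%N).
  move: ht; rewrite ltr_pdivrMr // => ht.
  have h3 : `|t%:R * Y j'.+1 a b| <= `|Z a b + t%:R * Y j'.+1 a b| + `|Z a b|.
    by apply: le_trans (ler_normB _ _); rewrite addrAC subrr add0r.
  move: h3; rewrite normrM ger0_norm // => h3.
  have := bnd t; lra.
rewrite j00 in Yj1.
pose E := F ^+ k.+1.
have EF : E * F = E.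
  by move: Yj1; rewrite /Y expr1 -/E mulrBr mulr1 => /eqP; rewrite subr_eq0 => /eqP.
have FE : F * E = E by rewrite /E -exprS exprSr EF.
have EFt t : E * F ^+ t = E.
  by elim: t => [|t IH]; [rewrite expr0 mulr1 | rewrite exprSr mulrA IH EF].
have FtE t : F ^+ t * E = E.
  by elim: t => [|t IH]; [rewrite expr0 mul1r | rewrite exprS -mulrA IH FE].
have EE : E * E = E := EFt k.+1.
have Epos i j : 0 < E i j.
  have e : E *m F ^+ n.+1 = E by rewrite mulmxE EFt.
  rewrite -e; apply: lt_le_trans (mul_ge i i j (nng_exp _ hF) (nng_exp _ hF)).
  by rewrite mulr_gt0 // dpos.
have Ecol c : E *m (\col_i E i c) = \col_i E i c.
  apply/matrixP => i z; rewrite (ord1 z) !mxE.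
  have := congr1 (fun M : 'M[R]_n.+1 => M i c) EE; rewrite -mulmxE mxE => <-.
  by apply: eq_bigr => l _; rewrite mxE.
have hprop l j : E l j * E 0 0 = E 0 j * E l 0.
  have wpos i : 0 < (\col_i E i 0) i 0 by rewrite mxE.
  have [t ht] := pf_uniq Epos wpos (Ecol 0) (Ecol j).
  have h1 := congr1 (fun M : 'cV[R]_n.+1 => M l 0) ht.
  have h2 := congr1 (fun M : 'cV[R]_n.+1 => M 0 0) ht.
  rewrite /= !mxE in h1 h2; rewrite h1 h2; ring.
have trE : \tr E = 1.
  have h : E 0 0 * \tr E = E 0 0 * 1.
    rewrite mulr1; transitivity ((E * E) 0 0); last by rewrite EE.
    rewrite -mulmxE mxE /mxtrace mulr_sumr; apply: eq_bigr => j _.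
    by rewrite mulrC hprop.
  exact: (mulfI (lt0r_neq0 (Epos 0 0)) h).
have nil t : (F - E) ^+ t.+1 = F ^+ t.+1 - E.
  elim: t => [|t IH]; first by rewrite !expr1.
  by rewrite exprSr IH mulrBr !mulrBl -exprSr FtE EF EE subrr subr0.
have trN : \tr (F - E) = 0 by apply: (nil_tr0 (j := k.+1)); rewrite nil subrr.
by rewrite -[F](subrK E) mxtraceD trN trE add0r.
Qed.

Lemma no_block k n (B : 'M[R]_n) : (2 <= k)%N -> (0 < n)%N -> nng B ->
  (forall i, B i i = 0) ->
  (forall T : {set 'I_n}, T != set0 ->
     (forall i j, i \in T -> 0 < B i j -> j \in T) -> T = setT) ->
  (B - 1) ^+ k * (B + (k%:R / k.+1%:R)%:M) ^+ k.+1 = 0 -> False.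
Proof.
case: n B => [//|n] B k2 _ hB hd hirr hid.
set c := (k%:R / k.+1%:R : R).
have c0 : 0 < c by rewrite divr_gt0 // ltr0n; lia.
set r := 1 + c.
have r0 : 0 < r by rewrite addr_gt0.
pose F := r^-1 *: (B + c%:M).
have rF : r *: F = B + c%:M by rewrite /F scalerA mulfV ?lt0r_neq0 // scale1r.
have rF1 : r *: (F - 1) = B - 1.
  rewrite scalerBr rF -scalemx1 /r; apply/matrixP => i j; rewrite !mxE.
  case: (i == j); rewrite /= ?mulr1n ?mulr0n; ring.
have hF : nng F.
  move=> i j; rewrite !mxE; apply: mulr_ge0; first by rewrite invr_ge0 ltW.
  by rewrite addr_ge0 // mulrn_wge0 // ltW.
have hdF i : F i i = r^-1 * c by rewrite !mxE hd eqxx mulr1n add0r.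
have d0 : 0 < r^-1 * c by rewrite mulr_gt0 // invr_gt0.
have hirrF : forall T : {set 'I_n.+1}, T != set0 ->
     (forall i j, i \in T -> 0 < F i j -> j \in T) -> T = setT.
  move=> T Tn cl; apply: hirr => // i j iT Bij.
  have [<-//|nij] := eqVneq i j.
  by apply: cl iT _; rewrite !mxE (negPf nij) mulr0n addr0 mulr_gt0 // invr_gt0.
have hidF : (F - 1) ^+ k * F ^+ k.+1 = 0.
  move: hid; rewrite -rF -rF1 !exprZn -scalerAl -scalerAr scalerA => /eqP.
  by rewrite scaler_eq0 mulf_eq0 !expf_eq0 (negPf (lt0r_neq0 r0)) !andbF /= => /eqP.
have k0 : (0 < k)%N by lia.
have := pf_trace hF hdF d0 hirrF k0 hidF.
rewrite /mxtrace (eq_bigr (fun _ => r^-1 * c)) // sumr_const card_ord => h.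
have e : r^-1 * c = k%:R / (2 * k + 1)%:R.
  rewrite /r /c natrD natrM; field.
  have K0 : 0 <= k%:R :> R by apply: ler0n.
  by apply/andP; split; apply/negP => /eqP; lra.
move: h; rewrite e -[_ *+ n.+1]mulr_natl mulrA => /(congr1 (fun x => x * (2 * k + 1)%:R)).
rewrite divfK ?pnatr_eq0 ?addn1 // mul1r -natrM => /eqP; rewrite eqr_nat => /eqP.
move=> h; case: (leqP n.+1 2) => hn.
  have := leq_mul hn (leqnn k); lia.
have := leq_mul hn (leqnn k); lia.
Qed.

Definition subm n (S : {set 'I_n}) (M : 'M[R]_n) : 'M[R]_#|S| :=
  \matrix_(i, j) M (enum_val i) (enum_val j).

Definition closedS n (S : {set 'I_n}) (M : 'M[R]_n) :=
  forall i j, i \in S -> j \notin S -> M i j = 0.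

Lemma subm_mul n (S : {set 'I_n}) (M N : 'M[R]_n) :
  closedS S M -> subm S (M * N) = subm S M * subm S N.
Proof.
move=> cM; apply/matrixP => i j; rewrite -!mulmxE !mxE.
rewrite (bigID (mem S)) /= [X in _ + X]big1 ?addr0; last first.
  by move=> l /= hl; rewrite cM ?enum_valP // mul0r.
rewrite (big_enum_val (A := mem S)) /=; apply: eq_bigr => l _; by rewrite !mxE.
Qed.

Lemma closedS_mul n (S : {set 'I_n}) (M N : 'M[R]_n) :
  closedS S M -> closedS S N -> closedS S (M * N).
Proof.
move=> cM cN i j iS jS; rewrite -mulmxE mxE big1 // => l _.
by case: (boolP (l \in S)) => hl; [rewrite cN // mulr0 | rewrite cM // mul0r].
Qed.

Lemma closedS1 n (S : {set 'I_n}) : closedS S 1.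
Proof.
move=> i j iS jS; rewrite mxE; case: eqP => [eij|_]; last by [].
by move: jS; rewrite -eij iS.
Qed.

Lemma subm1 n (S : {set 'I_n}) : subm S 1 = 1.
Proof. by apply/matrixP => i j; rewrite !mxE (inj_eq enum_val_inj). Qed.

Lemma subm_exp n (S : {set 'I_n}) (M : 'M[R]_n) t :
  closedS S M -> subm S (M ^+ t) = subm S M ^+ t /\ closedS S (M ^+ t).
Proof.
move=> cM; elim: t => [|t [IH1 IH2]]; first by rewrite !expr0 subm1; split=> //; exact: closedS1.
by rewrite !exprS subm_mul // IH1; split=> //; apply: closedS_mul.
Qed.

Lemma closedS_shift n (S : {set 'I_n}) (M : 'M[R]_n) a :
  closedS S M -> closedS S (M + a%:M).
Proof.
move=> cM i j iS jS; rewrite !mxE cM //; case: eqP => [eij|]; last by rewrite mulr0n addr0.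
by move: jS; rewrite -eij iS.
Qed.

Lemma subm_shift n (S : {set 'I_n}) (M : 'M[R]_n) a :
  subm S (M + a%:M) = subm S M + a%:M.
Proof. by apply/matrixP => i j; rewrite !mxE (inj_eq enum_val_inj). Qed.

Lemma main_real k n (A : 'M[R]_n.+1) : (2 <= k)%N -> nng A -> \tr A = 0 ->
  (A - 1) ^+ k * (A + (k%:R / k.+1%:R)%:M) ^+ k.+1 = 0 -> False.
Proof.
move=> k2 hA trA hid.
have hd i : A i i = 0 := psumr_eq0P (fun i _ => hA i i) trA (i := i) isT.
pose clb (T : {set 'I_n.+1}) := [forall i in T, forall j, (A i j != 0) ==> (j \in T)].
have PT : ([set: 'I_n.+1] != set0) && clb [set: 'I_n.+1].
  apply/andP; split; first by apply/set0Pn; exists ord0; rewrite inE.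
  by apply/forall_inP => i _; apply/forallP => j; rewrite inE implybT.
case: (@arg_minnP _ [set: 'I_n.+1] (fun T => (T != set0) && clb T) (fun T : {set 'I_n.+1} => #|T|) PT) => S /andP[Sn0 Scl] Smin.
have clS i j : i \in S -> A i j != 0 -> j \in S.
  by move=> iS; move/forall_inP: Scl => /(_ i iS)/forallP/(_ j)/implyP.
have cA : closedS S A.
  move=> i j iS jS; apply/eqP; apply: contraNT jS; exact: clS.
set c := (k%:R / k.+1%:R : R) in hid.
have em1 : A - 1 = A + (-1)%:M by rewrite raddfN.
have idB : (subm S A - 1) ^+ k * (subm S A + c%:M) ^+ k.+1 = 0.
  have h := congr1 (subm S) hid.
  have [e1 c1] := subm_exp k (closedS_shift (-1) cA).
  have [e2 c2] := subm_exp k.+1 (closedS_shift c cA).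
  have z : subm S 0 = 0 by apply/matrixP => i j; rewrite !mxE.
  by move: h; rewrite em1 subm_mul // e1 e2 !subm_shift raddfN z.
apply: (no_block k2 _ _ _ _ idB).
- by rewrite card_gt0.
- by move=> i j; rewrite mxE.
- by move=> i; rewrite mxE hd.
move=> T Tn cl.
pose T' := [set enum_val i | i in T].
have : (T' != set0) && clb T'.
  apply/andP; split.
    by case/set0Pn: Tn => x xT; apply/set0Pn; exists (enum_val x); rewrite imset_f.
  apply/forall_inP => i' /imsetP[i iT ->]; apply/forallP => j; apply/implyP => Aij.
  have jS := clS _ _ (enum_valP i) Aij.
  pose j' := enum_rank_in (enum_valP i) j.
  have ej : enum_val j' = j by rewrite /j' enum_rankK_in.
  rewrite -ej imset_f //; apply: cl iT _; rewrite mxE ej lt_neqAle eq_sym Aij hA.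
  done.
move/Smin; rewrite card_imset; last exact: enum_val_inj.
move=> hc; apply/eqP; rewrite eqEcard subsetT cardsT card_ord.
done.
Qed.

Lemma sum_nseq (T : nmodType) m (x : T) : \sum_(l <- nseq m x) l = x *+ m.
Proof. by elim: m => [|m IH]; rewrite ?big_nil ?mulr0n // big_cons IH mulrS. Qed.

Lemma prod_nseq (T : comNzRingType) m (x : T) :
  \prod_(l <- nseq m x) ('X - l%:P) = ('X - x%:P) ^+ m.
Proof. by elim: m => [|m IH]; rewrite ?big_nil ?expr0 // big_cons IH exprS. Qed.

End PF.

Unset Implicit Arguments.
Theorem theorem2 (R : realType) (k : nat) (hk : (2 <= k)%N) :
  size (sigma R k) = (2 * k + 1)%N /\
  \sum_(l <- sigma R k) l = 0 /\
  ~ realizable (sigma R k).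
Proof.
have hsz : size (sigma R k) = (2 * k).+1 by rewrite /sigma size_cat !size_nseq; lia.
pose c := (k%:R / k.+1%:R : R).
pose sR := nseq k (1 : R) ++ nseq k.+1 (- c).
have sRs : sigma R k = map (real_complex R) sR.
  by rewrite /sigma /sR map_cat !map_nseq rmorph1.
have sumR : \sum_(l <- sR) l = 0.
  rewrite /sR big_cat !sum_nseq mulNrn /c -[_ / _ *+ _]mulr_natr divfK; last by rewrite pnatr_eq0.
  by rewrite /= subrr.
split; first by rewrite hsz addn1.
split.
  by rewrite sRs big_map -rmorph_sum /= sumR rmorph0.
move=> [A [hA hcp]].
move: A hA hcp; rewrite hsz => A hA hcp.
have cpA : char_poly A = \prod_(l <- sR) ('X - l%:P).
  apply: (@map_poly_inj _ _ (real_complex R)).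
  by rewrite map_char_poly hcp sRs prod_map_poly.
have ssR : size sR = (2 * k).+1 by rewrite -hsz sRs size_map.
have trA : \tr A = 0.
  have := char_poly_trace A (ltn0Sn _); rewrite cpA.
  have := coefPn_prod_XsubC (ps := sR); rewrite ssR => -> //.
  by rewrite sumR oppr0 => /esym/eqP; rewrite oppr_eq0 => /eqP.
have := Cayley_Hamilton A; rewrite cpA /sR big_cat !prod_nseq.
rewrite rmorphM !rmorphXn !rmorphB /= !horner_mx_X !horner_mx_C raddfN opprK.
exact: main_real hk hA trA.
Qed.
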